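(* Let $N_o>0$, $\alpha>0$, and $\eta(d)=\frac{1}{(1+d)^\alpha}$. Let $C,D>0$ and let $t,r\in\mathbb{R}^2$ and $T$ a finite subset of $\mathbb{R}^2$ be such that $(t,r,T)$ satisfies the DC$(C,D)$ criterion. Then for all $P>0$, $$\mathrm{SINR}(t,r,T,P,N_o,\eta)\ \ge\ \frac{1}{(1+C)^\alpha\Big(\frac{N_o}{P}+\sum_{k=1}^{K}\frac{6k+3}{(1+kC(1+D/2))^\alpha}\Big)},$$ where $K=\Big\lfloor\frac{\max\{\|t'-r\|:t'\in T\}}{C(1+D/2)}\Big\rfloor$.
   Context: $\mathrm{SINR}(t,r,T,P,N_o,\eta)=\dfrac{P\eta(\|t-r\|)}{N_o+\sum_{t'\in T}P\eta(\|t'-r\|)}$. The triple $(t,r,T)$ satisfies DC$(C,D)$ if $\|t-r\|\le C$ and $\|t'-t''\|\ge C(2+D)$ for all distinct $t',t''\in T\cup\{t\}$. *)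

(* Defs.v *)
From HB Require Import structures.
From mathcomp Require Import all_boot all_order all_algebra.
From mathcomp Require Import all_classical all_reals all_analysis.
Set Implicit Arguments. Unset Strict Implicit. Unset Printing Implicit Defensive.
Import Order.TTheory GRing.Theory Num.Theory.
Local Open Scope ring_scope.

Definition dist2 {R : realType} (p q : R * R) : R :=
  Num.sqrt ((p.1 - q.1) ^+ 2 + (p.2 - q.2) ^+ 2).

Definition eta_pl {R : realType} (alpha d : R) : R := 1 / ((1 + d) `^ alpha).

(* SINR(t, r, T, P, No, eta); T a finite set given as a duplicate-free list. *)
Definition SINR {R : realType} (t r : R * R) (T : seq (R * R)) (P No : R)
  (eta : R -> R) : R :=
  P * eta (dist2 t r) / (No + \sum_(t' <- T) P * eta (dist2 t' r)).

Definition DC {R : realType} (C D : R) (t r : R * R) (T : seq (R * R)) : Prop :=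
  dist2 t r <= C /\
  (forall a b, a \in t :: T -> b \in t :: T -> a != b -> C * (2 + D) <= dist2 a b).

(* max { ||t' - r|| : t' in T } (taken as 0 when T is empty). *)
Definition maxdist {R : realType} (r : R * R) (T : seq (R * R)) : R :=
  \big[Num.max/0]_(t' <- T) dist2 t' r.

Definition Kbound {R : realType} (C D : R) (r : R * R) (T : seq (R * R)) : nat :=
  Num.truncn (maxdist r T / (C * (1 + D / 2))).

(* Main.v *)
Require Import Defs.
From HB Require Import structures.
From mathcomp Require Import all_boot all_order all_algebra.
From mathcomp Require Import all_classical all_reals all_analysis.
From mathcomp Require Import ring lra.
Import Order.TTheory GRing.Theory Num.Theory.
Import numFieldNormedType.Exports.
Local Open Scope classical_set_scope.
Local Open Scope ring_scope.

Lemma sin_le_id (R : realType) (y : R) : 0 <= y -> sin y <= y.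
Proof.
move=> y0.
have hd : forall x, x \in `]0, y[%R -> is_derive x 1 (fun x => x - sin x) (1 - cos x).
  move=> x _. apply: is_deriveB.
have hc : {within `[0, y], continuous (fun x : R => x - sin x)}.
  apply: continuous_subspaceT => x.
  apply: continuousB; [exact: cvg_id | exact: continuous_sin].
have [c _ h] := MVT_segment y0 hd hc.
move: h; rewrite sin0 !subr0 => h.
have : 0 <= (1 - cos c) * y by rewrite mulr_ge0 // subr_ge0 cos_le1.
by rewrite -h subr_ge0.
Qed.

Lemma one_m_cos (R : realType) (x : R) : 0 <= x <= pi -> 1 - cos x <= x ^+ 2 / 2.
Proof.
move=> /andP[x0 xpi].
have e : cos x = cos (x / 2) ^+ 2 *+ 2 - 1.
  by rewrite -cos_mulr2n mulr2n -splitr.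
have s0 : 0 <= sin (x / 2).
  apply: sin_ge0_pi; apply/andP; split; first by rewrite divr_ge0.
  have := @pi_ge0 R; rewrite ler_pdivrMr //; lra.
have s1 : sin (x / 2) <= x / 2 by apply: sin_le_id; rewrite divr_ge0.
have s2 : sin (x / 2) ^+ 2 <= (x / 2) ^+ 2 by rewrite ler_pXn2r // nnegrE // divr_ge0.
have := cos2Dsin2 (x / 2).
have ex : x ^+ 2 / 2 = 2 * (x / 2) ^+ 2 by field.
rewrite e mulr2n ex. lra.
Qed.

Lemma pi_lt4 (R : realType) : pi < 4 :> R.
Proof. have := @pihalf_lt2 R; rewrite ltr_pdivrMr //; lra. Qed.

Lemma cos_pi4 (R : realType) : 5 / 8 <= cos (pi / 4 : R).
Proof.
have e : cos (pi / 2 : R) = cos (pi / 4) ^+ 2 *+ 2 - 1.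
  by rewrite -cos_mulr2n mulr2n; congr cos; field.
rewrite cos_pihalf mulr2n in e.
have : 0 <= cos (pi / 4 : R).
  apply: cos_ge0_pihalf. have := @pi_gt0 R => h. apply/andP; split; lra.
nra.
Qed.

Lemma alpha_bound (R : realType) (k : nat) : (1 <= k)%N ->
  2 * (k%:R + 1) ^+ 2 * (1 - cos (pi *+ 2 / (6 * k%:R + 3))) <= 3 :> R.
Proof.
move=> k1.
have K1 : 1 <= k%:R :> R by rewrite ler1n.
have pi0 := @pi_gt0 R. have pi4 := @pi_lt4 R.
set a := pi *+ 2 / _.
have Mpos : 0 < 6 * k%:R + 3 :> R by lra.
have ea : a * (6 * k%:R + 3) = pi *+ 2 by rewrite /a divfK // gt_eqF.
have a0 : 0 <= a by rewrite /a divr_ge0 // ?mulr2n; lra.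
have api : a <= pi by rewrite /a ler_pdivrMr // mulr2n; nra.
case: (leqP k 1) => kk.
  have -> : k = 1%N by apply/eqP; rewrite eqn_leq kk k1.
  have hle : cos (pi / 4) <= cos a.
    have : a <= pi / 4.
      rewrite /a. rewrite ler_pdivrMr; last lra. rewrite mulr2n. nra.
    rewrite le_eqVlt => /predU1P [-> //| h].
    apply: ltW. rewrite ltr_cos // in_itv /=; apply/andP; split; lra.
  have := @cos_pi4 R. lra.
have K2 : 2 <= k%:R :> R by rewrite ler_nat.
have hc : 1 - cos a <= a ^+ 2 / 2 by apply: one_m_cos; rewrite a0 api.
set b := (k%:R + 1) * a.
have eb : b * (6 * k%:R + 3) = pi *+ 2 * (k%:R + 1).
  by rewrite /b -mulrA (mulrC a) mulrA -ea; ring.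
have b2 : b ^+ 2 <= 3.
  have h1 : (b * (6 * k%:R + 3)) ^+ 2 <= 3 * (6 * k%:R + 3) ^+ 2.
    rewrite eb mulr2n.
    have q0 : 0 <= (pi + pi) * (k%:R + 1) :> R by apply: mulr_ge0; lra.
    have q1 : (pi + pi) * (k%:R + 1) <= 8 * (k%:R + 1) :> R.
      by rewrite ler_pM2r; lra.
    have q2 : ((pi + pi) * (k%:R + 1)) ^+ 2 <= (8 * (k%:R + 1)) ^+ 2 :> R.
      by rewrite ler_pXn2r // nnegrE //; nra.
    nra.
  rewrite exprMn in h1. nra.
have : 2 * (k%:R + 1) ^+ 2 * (1 - cos a) <= 2 * (k%:R + 1) ^+ 2 * (a ^+ 2 / 2).
  apply: ler_wpM2l => //; nra.
have : 2 * (k%:R + 1) ^+ 2 * (a ^+ 2 / 2) = b ^+ 2 by rewrite /b; field.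
lra.
Qed.

Definition nrm (R : realType) (x y : R) := Num.sqrt (x ^+ 2 + y ^+ 2).
Arguments nrm {R}.
Definition ang (R : realType) (x y : R) : R :=
  if 0 <= y then acos (x / nrm x y) else pi *+ 2 - acos (x / nrm x y).
Arguments ang {R}.

Lemma ang_spec (R : realType) (x y : R) : 0 < nrm x y ->
  [/\ 0 <= ang x y, ang x y < pi *+ 2, x = nrm x y * cos (ang x y)
    & y = nrm x y * sin (ang x y)].
Proof.
move=> rp.
have r2 : nrm x y ^+ 2 = x ^+ 2 + y ^+ 2.
  by rewrite /nrm sqr_sqrtr // addr_ge0 // sqr_ge0.
have rn : nrm x y != 0 by rewrite gt_eqF.
set rho := nrm x y in rp r2 rn *.
have z2 : 1 - (x / rho) ^+ 2 = (y / rho) ^+ 2.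
  rewrite !expr_div_n.
  have -> : y ^+ 2 = rho ^+ 2 - x ^+ 2 by rewrite r2; ring.
  by field.
have zb : -1 <= x / rho <= 1.
  have : 0 <= (y / rho) ^+ 2 by rewrite sqr_ge0.
  rewrite -z2 => h; apply/andP; split; nra.
have zin : x / rho \in `[(-1), 1] by rewrite in_itv /=.
have hc : cos (acos (x / rho)) = x / rho by rewrite acosK.
have hs : sin (acos (x / rho)) = `|y| / rho.
  rewrite sin_acos // z2 sqrtr_sqr normf_div (gtr0_norm rp) //.
have pi0 := @pi_gt0 R.
have a0 := acos_ge0 zb. have api := acos_lepi zb.
rewrite /ang; case: ifPn => hy.
  split => //.
  - rewrite mulr2n; lra.
  - by rewrite hc; field.
  - by rewrite hs ger0_norm //; field.
have hy' : y < 0 by rewrite ltNge.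
have zlt : x / rho < 1.
  have : 0 < (y / rho) ^+ 2.
    by rewrite exprn_even_gt0 //= mulf_neq0 // ?invr_eq0 // lt_eqF.
  rewrite -z2 => h. nra.
have ag : 0 < acos (x / rho) by apply: acos_gt0; rewrite zlt andbT; case/andP: zb.
split.
- rewrite mulr2n; lra.
- rewrite mulr2n; lra.
- by rewrite addrC cosD2pi cosN hc; field.
- by rewrite addrC sinD2pi sinN hs ltr0_norm //; field.
Qed.

Lemma polar_id (R : realType) (r1 r2 c1 s1 c2 s2 : R) :
  c1 ^+ 2 + s1 ^+ 2 = 1 -> c2 ^+ 2 + s2 ^+ 2 = 1 ->
  (r1 * c1 - r2 * c2) ^+ 2 + (r1 * s1 - r2 * s2) ^+ 2
  = r1 ^+ 2 + r2 ^+ 2 - 2 * r1 * r2 * (c1 * c2 + s1 * s2).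
Proof.
move=> e1 e2; apply/eqP; rewrite -subr_eq0; apply/eqP.
transitivity (r1 ^+ 2 * (c1 ^+ 2 + s1 ^+ 2 - 1) + r2 ^+ 2 * (c2 ^+ 2 + s2 ^+ 2 - 1)).
  ring.
by rewrite e1 e2 subrr !mulr0 addr0.
Qed.

Lemma close_sector (R : realType) (c : R) (k : nat) (p q r : R * R) :
  0 < c -> (1 <= k)%N ->
  k%:R * c <= dist2 p r < k.+1%:R * c ->
  k%:R * c <= dist2 q r < k.+1%:R * c ->
  `|ang (p.1 - r.1) (p.2 - r.2) - ang (q.1 - r.1) (q.2 - r.2)|
     < pi *+ 2 / (6 * k%:R + 3) ->
  dist2 p q < 2 * c.
Proof.
move=> c0 k1 /andP[hp1 hp2] /andP[hq1 hq2] hang.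
have K1 : 1 <= k%:R :> R by rewrite ler1n.
have ek : k.+1%:R = k%:R + 1 :> R by rewrite -natr1.
rewrite ek in hp2 hq2.
have rp : 0 < nrm (p.1 - r.1) (p.2 - r.2).
  apply: lt_le_trans hp1; nra.
have rq : 0 < nrm (q.1 - r.1) (q.2 - r.2).
  apply: lt_le_trans hq1; nra.
have [_ _ ex1 ey1] := ang_spec _ _ _ rp.
have [_ _ ex2 ey2] := ang_spec _ _ _ rq.
set r1 := nrm (p.1 - r.1) (p.2 - r.2) in rp ex1 ey1 hp1 hp2.
set r2 := nrm (q.1 - r.1) (q.2 - r.2) in rq ex2 ey2 hq1 hq2.
set f1 := ang (p.1 - r.1) (p.2 - r.2) in ex1 ey1 hang.
set f2 := ang (q.1 - r.1) (q.2 - r.2) in ex2 ey2 hang.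
set a := pi *+ 2 / (6 * k%:R + 3) in hang.
have pi0 := @pi_gt0 R.
have Mpos : 0 < 6 * k%:R + 3 :> R by lra.
have a0 : 0 <= a by rewrite /a divr_ge0 // ?mulr2n; lra.
have api : a <= pi by rewrite /a ler_pdivrMr // mulr2n; nra.
have hcos : cos a < cos (f1 - f2).
  have n0 := normr_ge0 (f1 - f2).
  rewrite -[cos (f1 - f2)]cos_norm ltr_cos // ?in_itv /=; try (apply/andP; split); lra.
have hab := alpha_bound R k k1.
have ca1 : cos a <= 1 := cos_le1 a.
have er1 : dist2 p r = r1 by [].
have er2 : dist2 q r = r2 by [].
rewrite er1 in hp1 hp2; rewrite er2 in hq1 hq2.
have X : (p.1 - q.1) ^+ 2 + (p.2 - q.2) ^+ 2
   = r1 ^+ 2 + r2 ^+ 2 - 2 * r1 * r2 * cos (f1 - f2).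
  have -> : p.1 - q.1 = (p.1 - r.1) - (q.1 - r.1) by ring.
  have -> : p.2 - q.2 = (p.2 - r.2) - (q.2 - r.2) by ring.
  rewrite {1}ex1 {1}ex2 {1}ey1 {1}ey2 cosB.
  by apply: polar_id; rewrite cos2Dsin2.
have h4 : (p.1 - q.1) ^+ 2 + (p.2 - q.2) ^+ 2 < (2 * c) ^+ 2.
  rewrite X.
  have d1 : (r1 - r2) ^+ 2 < c ^+ 2.
    rewrite -subr_gt0 subr_sqr; apply: mulr_gt0; lra.
  have p12 : r1 * r2 <= ((k%:R + 1) * c) ^+ 2.
    rewrite expr2; apply: ler_pM; lra.
  have t1 : 2 * r1 * r2 * (1 - cos (f1 - f2)) <= 2 * r1 * r2 * (1 - cos a).
    apply: ler_wpM2l; [nra | lra].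
  have t2 : 2 * r1 * r2 * (1 - cos a) <= 2 * ((k%:R + 1) * c) ^+ 2 * (1 - cos a).
    apply: ler_wpM2r; [lra | nra].
  have t3 : 2 * ((k%:R + 1) * c) ^+ 2 * (1 - cos a) <= 3 * c ^+ 2.
    have -> : 2 * ((k%:R + 1) * c) ^+ 2 * (1 - cos a)
       = (2 * (k%:R + 1) ^+ 2 * (1 - cos a)) * c ^+ 2 by ring.
    apply: ler_wpM2r => //; exact: sqr_ge0.
  have -> : r1 ^+ 2 + r2 ^+ 2 - 2 * r1 * r2 * cos (f1 - f2)
     = (r1 - r2) ^+ 2 + 2 * r1 * r2 * (1 - cos (f1 - f2)) by ring.
  have -> : (2 * c) ^+ 2 = c ^+ 2 + 3 * c ^+ 2 by ring.
  lra.
rewrite /dist2 -(@ger0_norm _ (2 * c)); last lra.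
rewrite -sqrtr_sqr ltr_sqrt //.
by rewrite exprn_even_gt0 //= mulf_neq0 // gt_eqF.
Qed.

Lemma count_annulus (R : realType) (c : R) (k : nat) (r : R * R) (F : seq (R * R)) :
  0 < c -> (1 <= k)%N -> uniq F ->
  (forall p, p \in F -> k%:R * c <= dist2 p r < k.+1%:R * c) ->
  (forall p q, p \in F -> q \in F -> p != q -> 2 * c <= dist2 p q) ->
  (size F <= 6 * k + 3)%N.
Proof.
move=> c0 k1 uF hF hsep.
have K1 : 1 <= k%:R :> R by rewrite ler1n.
have pi0 := @pi_gt0 R.
have Mpos : 0 < 6 * k%:R + 3 :> R by lra.
set a : R := pi *+ 2 / (6 * k%:R + 3).
have a0 : 0 < a by rewrite /a divr_gt0 // mulr2n; lra.
have ea : a * (6 * k%:R + 3) = pi *+ 2 by rewrite /a divfK // gt_eqF.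
pose s (p : R * R) := Num.truncn (ang (p.1 - r.1) (p.2 - r.2) / a).
have rpos : forall p, p \in F -> 0 < nrm (p.1 - r.1) (p.2 - r.2).
  move=> p /hF/andP[h1 _]; apply: lt_le_trans h1; nra.
have hs : forall p, p \in F -> (s p < 6 * k + 3)%N.
  move=> p hp; have [g0 g2 _ _] := ang_spec _ _ _ (rpos p hp).
  rewrite /s truncn_lt_nat; last by rewrite divr_ge0 // ltW.
  rewrite ltr_pdivrMr //.
  have -> : (6 * k + 3)%:R = 6 * k%:R + 3 :> R by rewrite natrD natrM.
  by rewrite mulrC ea.
have inj : {in F &, injective s}.
  move=> p q hp hq e; apply/eqP; apply/negPn/negP => ne.
  have := hsep p q hp hq ne; rewrite leNgt => /negP; apply.
  apply: (close_sector R c k p q r c0 k1 (hF p hp) (hF q hq)).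
  have [g0 _ _ _] := ang_spec _ _ _ (rpos p hp).
  have [h0 _ _ _] := ang_spec _ _ _ (rpos q hq).
  have /andP[u1 u2] := truncn_itv (divr_ge0 g0 (ltW a0)).
  have /andP[v1 v2] := truncn_itv (divr_ge0 h0 (ltW a0)).
  rewrite -/(s p) in u1 u2; rewrite -/(s q) -e in v1 v2.
  set f1 := ang (p.1 - r.1) (p.2 - r.2) in u1 u2 *.
  set f2 := ang (q.1 - r.1) (q.2 - r.2) in v1 v2 *.
  have ed : f1 - f2 = a * (f1 / a - f2 / a) by field; rewrite gt_eqF.
  rewrite ed normrM (gtr0_norm a0) -[X in _ < X]mulr1 ltr_pM2l //.
  rewrite ltr_norml; rewrite -natr1 in u2 v2; apply/andP; split; lra.
have u : uniq (map s F) by rewrite map_inj_in_uniq.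
have sub : {subset map s F <= iota 0 (6 * k + 3)}.
  by move=> i /mapP[p hp ->]; rewrite mem_iota add0n hs.
by have := uniq_leq_size u sub; rewrite size_map size_iota.
Qed.

Lemma dist2_sym (R : realType) (p q : R * R) : dist2 p q = dist2 q p.
Proof. by rewrite /dist2; congr Num.sqrt; ring. Qed.

Lemma dist2_ge0 (R : realType) (p q : R * R) : 0 <= dist2 p q.
Proof. exact: sqrtr_ge0. Qed.

Lemma dist2_tri (R : realType) (p q s : R * R) :
  dist2 p s <= dist2 p q + dist2 q s.
Proof.
rewrite /dist2.
have -> : p.1 - s.1 = (p.1 - q.1) + (q.1 - s.1) by ring.
have -> : p.2 - s.2 = (p.2 - q.2) + (q.2 - s.2) by ring.
set a1 := p.1 - q.1; set a2 := p.2 - q.2; set b1 := q.1 - s.1; set b2 := q.2 - s.2.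
have A0 : 0 <= a1 ^+ 2 + a2 ^+ 2 by rewrite addr_ge0 // sqr_ge0.
have B0 : 0 <= b1 ^+ 2 + b2 ^+ 2 by rewrite addr_ge0 // sqr_ge0.
have sA := sqr_sqrtr A0. have sB := sqr_sqrtr B0.
have gA := sqrtr_ge0 (a1 ^+ 2 + a2 ^+ 2). have gB := sqrtr_ge0 (b1 ^+ 2 + b2 ^+ 2).
set SA := Num.sqrt (a1 ^+ 2 + a2 ^+ 2) in sA gA *.
set SB := Num.sqrt (b1 ^+ 2 + b2 ^+ 2) in sB gB *.
have cs2 : (a1 * b1 + a2 * b2) ^+ 2 <= (SA * SB) ^+ 2.
  rewrite exprMn sA sB. have := sqr_ge0 (a1 * b2 - a2 * b1). nra.
have cs : a1 * b1 + a2 * b2 <= SA * SB.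
  have g : 0 <= SA * SB by rewrite mulr_ge0.
  nra.
rewrite -(@ger0_norm _ (SA + SB)); last by rewrite addr_ge0.
rewrite -sqrtr_sqr ler_sqrt; last exact: sqr_ge0.
have -> : (SA + SB) ^+ 2 = SA ^+ 2 + SB ^+ 2 + 2 * (SA * SB) by ring.
rewrite sA sB. nra.
Qed.

Lemma sum_by_index (R : realType) (T : eqType) (s : seq T) (g : T -> nat)
  (h : nat -> R) (K : nat) :
  (forall x, x \in s -> (1 <= g x <= K)%N) ->
  \sum_(x <- s) h (g x)
  = \sum_(1 <= k < K.+1) (count (fun x => g x == k) s)%:R * h k.
Proof.
elim: s => [_ | a s IH hs].
  by rewrite big_nil big1 // => k _; rewrite /= mul0r.
rewrite big_cons IH; last by move=> x hx; apply: hs; rewrite inE hx orbT.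
have ha := hs a (mem_head a s).
under [RHS]eq_bigr => k _ do rewrite /= natrD mulrDl.
rewrite big_split /=; congr (_ + _).
rewrite (bigD1_seq (g a)) /=; last exact: iota_uniq.
  rewrite eqxx mul1r big1 ?addr0 // => k hk.
  by rewrite eq_sym (negPf hk) mul0r.
by rewrite mem_index_iota ltnS.
Qed.

Theorem lemma1 (R : realType) (No alpha C D : R) (t r : R * R) (T : seq (R * R)) :
  0 < No -> 0 < alpha -> 0 < C -> 0 < D ->
  uniq T -> t \notin T ->
  DC C D t r T ->
  forall P : R, 0 < P ->
    1 / ((1 + C) `^ alpha *
         (No / P + \sum_(1 <= k < (Kbound C D r T).+1)
                     (6 * k%:R + 3) / ((1 + k%:R * C * (1 + D / 2)) `^ alpha)))
    <= SINR t r T P No (eta_pl alpha).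
Proof.
move=> No0 al0 C0 D0 uT tT [hdt hsep] P P0.
set c := C * (1 + D / 2).
have c0 : 0 < c by rewrite /c mulr_gt0 //; lra.
have inT : forall p, p \in T -> p \in t :: T by move=> p hp; rewrite inE hp orbT.
have hT : forall p, p \in T -> c <= dist2 p r.
  move=> p hp.
  have npt : p != t by apply/eqP => e; move: tT; rewrite -e hp.
  have h1 := hsep p t (inT p hp) (mem_head t T) npt.
  have h2 := dist2_tri R p r t.
  rewrite (dist2_sym R r t) in h2.
  rewrite /c; nra.
have hmax : forall p, p \in T -> dist2 p r <= maxdist r T.
  by move=> p hp; rewrite /maxdist; apply: (le_bigmax_seq 0 p xpredT (fun t' => dist2 t' r) hp).
pose g p := Num.truncn (dist2 p r / c).
have hg : forall p, p \in T -> (1 <= g p <= Kbound C D r T)%N.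
  move=> p hp; apply/andP; split.
    by rewrite /g truncn_gt0 ler_pdivlMr // mul1r hT.
  by rewrite /g /Kbound -/c; apply: le_truncn; rewrite ler_pM2r ?invr_gt0 // hmax.
have etaP : forall x y : R, 0 <= x <= y -> eta_pl alpha y <= eta_pl alpha x.
  move=> x y /andP[x0 xy]; rewrite /eta_pl !div1r lef_pV2 ?posrE ?powR_gt0 //; try lra.
  by apply: ge0_ler_powR; rewrite ?nnegrE; try lra.
have eta0 : forall x : R, 0 <= eta_pl alpha x.
  by move=> x; rewrite /eta_pl div1r invr_ge0 powR_ge0.
set S2 := \sum_(1 <= k < (Kbound C D r T).+1) _.
set S1 := \sum_(p <- T) eta_pl alpha (dist2 p r).
have S12 : S1 <= S2.
  apply: (@le_trans _ _ (\sum_(p <- T) eta_pl alpha ((g p)%:R * c))).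
    rewrite /S1 big_seq [X in _ <= X]big_seq; apply: ler_sum => p hp.
    apply: etaP; apply/andP; split; first by rewrite mulr_ge0 // ltW.
    by rewrite -ler_pdivlMr // truncn_le divr_ge0 // ltW // (lt_le_trans c0 (hT p hp)).
  rewrite (sum_by_index R _ T g (fun k => eta_pl alpha (k%:R * c)) _ hg).
  apply: ler_sum_nat => k /andP[k1 _].
  have -> : k%:R * C * (1 + D / 2) = k%:R * c by rewrite /c mulrA.
  rewrite [X in _ <= X]mulrC /eta_pl mulrA mulr1 [X in _ <= X]mulrC.
  apply: ler_wpM2r; first by rewrite invr_ge0 powR_ge0.
  have -> : 6 * k%:R + 3 = (6 * k + 3)%:R :> R by rewrite natrD natrM.
  rewrite ler_nat -size_filter.
  apply: (count_annulus R c k r) => //; first exact: filter_uniq.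
    move=> p; rewrite mem_filter => /andP[/eqP e hp].
    have := hT p hp => dc.
    have : (Num.truncn (dist2 p r / c) == k) by rewrite -/(g p) e.
    rewrite truncn_eq; last by rewrite divr_ge0 // ltW // (lt_le_trans c0 dc).
    by rewrite ler_pdivlMr // ltr_pdivrMr.
  move=> p q; rewrite !mem_filter => /andP[_ hp] /andP[_ hq] npq.
  have := hsep p q (inT p hp) (inT q hq) npq.
  by rewrite /c; nra.
have S10 : 0 <= S1 by rewrite /S1 sumr_ge0.
have B0 : 0 < (1 + C) `^ alpha by rewrite powR_gt0 //; lra.
have Et : 1 / (1 + C) `^ alpha <= eta_pl alpha (dist2 t r).
  by rewrite /eta_pl; apply: (etaP (dist2 t r) C); rewrite dist2_ge0 hdt.
rewrite /SINR -mulr_sumr -/S1.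
have -> : 1 / ((1 + C) `^ alpha * (No / P + S2))
   = (P * (1 / (1 + C) `^ alpha)) * (No + P * S2)^-1.
  field; apply/andP; split; rewrite gt_eqF //; nra.
apply: ler_pM.
- by apply: mulr_ge0; [exact: ltW | rewrite divr_ge0 // ltW].
- rewrite invr_ge0; nra.
- by rewrite ler_pM2l.
- rewrite lef_pV2 ?posrE; nra.
Qed.
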